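(* Let $M$ be an $A$-module and $\Omega M$ a syzygy of $M$ (the kernel of an epimorphism from a projective module onto $M$). Then $\mathrm{Ext}^n_A(G,M)=0$ for all $n\ge1$ and all Gorenstein-projective $G$ if and only if $\mathrm{Ext}^n_A(G,\Omega M)=0$ for all $n\ge1$ and all Gorenstein-projective $G$.
   Context: $A$ is an artin algebra; modules are arbitrary left $A$-modules. A complex $P^\bullet$ of projective modules is totally acyclic if it is acyclic and $\mathrm{Hom}_A(P^\bullet,Q)$ is acyclic for every projective $Q$; a module is Gorenstein-projective if it is isomorphic to $Z^0(P^\bullet)$ for such $P^\bullet$. *)

(* Defs.v *)
From HB Require Import structures.
From mathcomp Require Import all_boot all_algebra.
Set Implicit Arguments. Unset Strict Implicit. Unset Printing Implicit Defensive.
Import GRing.Theory.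
Local Open Scope ring_scope.

Definition is_ideal (R : comNzRingType) (I : R -> Prop) : Prop :=
  I 0 /\ (forall x y, I x -> I y -> I (x + y)) /\ (forall r x, I x -> I (r * x)).

Definition artinian (R : comNzRingType) : Prop :=
  forall I : nat -> R -> Prop,
    (forall n, is_ideal (I n)) ->
    (forall n x, I n.+1 x -> I n x) ->
    exists N, forall n, (N <= n)%N -> forall x, I n x <-> I N x.

Definition fin_gen_over (R : comNzRingType) (A : algType R) : Prop :=
  exists s : seq A, forall a : A,
    exists c : 'I_(size s) -> R, a = \sum_(i < size s) c i *: s`_i.

(* An artin algebra: an R-algebra (R maps into the centre of A, as encoded by
   [algType]) over a commutative artinian ring R, finitely generated as R-module. *)
Definition artin_algebra (R : comNzRingType) (A : algType R) : Prop :=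
  artinian R /\ fin_gen_over A.

Section Modules.
Variable A : pzRingType.

Definition projective (P : lmodType A) : Prop :=
  forall (X Y : lmodType A) (g : {linear X -> Y}) (f : {linear P -> Y}),
    (forall y, exists x, g x = y) ->
    exists h : {linear P -> X}, forall p, g (h p) = f p.

Record complex := Complex {
  cobj : int -> lmodType A;
  cd : forall k : int, {linear cobj k -> cobj (k + 1)} }.

Definition is_complex (C : complex) : Prop :=
  forall k x, cd C (k + 1) (cd C k x) = 0.

Definition acyclic (C : complex) : Prop :=
  is_complex C /\
  forall k (y : cobj C (k + 1)), cd C (k + 1) y = 0 -> exists x, cd C k x = y.

(* Hom_A(C, Q) is acyclic: exactness of
   Hom(C^{k+2},Q) -> Hom(C^{k+1},Q) -> Hom(C^k,Q) for every k. *)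
Definition Hom_acyclic (C : complex) (Q : lmodType A) : Prop :=
  forall k (phi : {linear cobj C (k + 1) -> Q}),
    (forall x, phi (cd C k x) = 0) ->
    exists psi : {linear cobj C (k + 1 + 1) -> Q},
      forall x, psi (cd C (k + 1) x) = phi x.

Definition totally_acyclic (C : complex) : Prop :=
  (forall k, projective (cobj C k)) /\ acyclic C /\
  forall Q : lmodType A, projective Q -> Hom_acyclic C Q.

(* G is isomorphic to Z^0(C) = ker (d^0 : C^0 -> C^1) *)
Definition gorenstein_projective (G : lmodType A) : Prop :=
  exists C : complex, totally_acyclic C /\
  exists i : {linear G -> cobj C 0},
    injective i /\ forall x, cd C 0 x = 0 <-> exists g, i g = x.

(* ... -> P_2 -> P_1 -> P_0 -> G -> 0 *)
Record proj_res (G : lmodType A) := ProjRes {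
  robj : nat -> lmodType A;
  rd : forall n : nat, {linear robj n.+1 -> robj n};
  raug : {linear robj 0 -> G} }.

Definition is_proj_res (G : lmodType A) (R : proj_res G) : Prop :=
  (forall n, projective (robj R n)) /\
  (forall g, exists x, raug R x = g) /\
  (forall x, raug R x = 0 <-> exists y, rd R 0 y = x) /\
  (forall n x, rd R n x = 0 <-> exists y, rd R n.+1 y = x).

(* Ext^n_A(G, M) = 0, computed as the n-th cohomology of Hom_A(P_., M) for a
   projective resolution P_. of G (this is independent of the resolution; we
   require it for every projective resolution). *)
Definition Ext_eq0 (n : nat) (G M : lmodType A) : Prop :=
  forall R : proj_res G, is_proj_res R ->
  match n return Prop with
  | 0 => forall phi : {linear robj R 0 -> M},
           (forall x, phi (rd R 0 x) = 0) -> forall x, phi x = 0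
  | m.+1 => forall phi : {linear robj R m.+1 -> M},
           (forall x, phi (rd R m.+1 x) = 0) ->
           exists psi : {linear robj R m -> M}, forall x, phi x = psi (rd R m x)
  end.

End Modules.

(* Main.v *)
Require Import Defs.
From HB Require Import structures.
From mathcomp Require Import all_boot all_algebra.
From mathcomp Require Import boolp zify.
Set Implicit Arguments. Unset Strict Implicit. Unset Printing Implicit Defensive.
Import GRing.Theory.
Local Open Scope ring_scope.


Section Lin.
Variables (A : pzRingType) (X Y : lmodType A) (f : X -> Y).
Hypothesis fL : forall a x y, f (a *: x + y) = a *: f x + f y.
Definition lwrap := f.
Lemma lwrap_lin : linear lwrap.
Proof. by move=> a x y; rewrite /lwrap fL. Qed.
HB.instance Definition _ := GRing.isLinear.Build A X Y *:%R lwrap lwrap_lin.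
Lemma mk_lin_ex : exists g : {linear X -> Y}, forall x, g x = f x.
Proof. by exists lwrap. Qed.
End Lin.

Section Img.
Variables (A : pzRingType) (X V : lmodType A) (g : {linear X -> V}).
Definition Sb : {pred V} := fun y => `[< exists x, g x = y >].
Lemma Sb_closed : subsemimod_closed Sb.
Proof.
split; first split.
- by apply/asboolP; exists 0; rewrite linear0.
- move=> x y /asboolP [x' <-] /asboolP [y' <-]; apply/asboolP.
  by exists (x' + y'); rewrite linearD.
- move=> a x /asboolP [x' <-]; apply/asboolP.
  by exists (a *: x'); rewrite linearZ.
Qed.
HB.instance Definition _ := GRing.isSubmodClosed.Build A V Sb Sb_closed.
Inductive subm : predArgType := SubM u & u \in Sb.
Definition smval w : V := let: SubM u _ := w in u.
HB.instance Definition _ := [isSub of subm for smval].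
HB.instance Definition _ := [Choice of subm by <:].
HB.instance Definition _ := [SubChoice_isSubLmodule of subm by <:].
Lemma smval_lin : linear smval. Proof. by []. Qed.
HB.instance Definition _ := GRing.isLinear.Build A subm V *:%R smval smval_lin.
Lemma smval_inj : injective smval. Proof. exact: val_inj. Qed.
Lemma smval_img y : (exists w, smval w = y) <-> exists x, g x = y.
Proof.
split; first by case=> -[u /asboolP Hu] /= <-.
move=> Hy; have Hy' : y \in Sb by apply/asboolP.
by exists (SubM Hy').
Qed.
End Img.

Lemma linB_aux (A : pzRingType) (V : lmodType A) (a : A) (x y u v : V) :
 (a*:x+y) - (a*:u + v) = a*:(x - u) + (y - v).
Proof. by rewrite scalerBr opprD addrACA. Qed.

Section Basics.
Variable A : pzRingType.

Lemma factor_inj (X Y Z : lmodType A) (j : {linear X -> Y}) (h : {linear Z -> Y}) :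
  injective j -> (forall z, exists x, j x = h z) ->
  exists k : {linear Z -> X}, forall z, j (k z) = h z.
Proof.
move=> ji hz.
pose k z := projT1 (cid (hz z)).
have kP z : j (k z) = h z by rewrite /k; case: cid.
have [k' Hk'] : exists k' : {linear Z -> X}, forall z, k' z = k z.
  apply: mk_lin_ex => a x y; apply: ji.
  by rewrite linearP !kP linearP.
by exists k' => z; rewrite Hk'.
Qed.

Lemma factor_surj (X Y Z : lmodType A) (s : {linear X -> Y}) (h : {linear X -> Z}) :
  (forall y, exists x, s x = y) -> (forall x, s x = 0 -> h x = 0) ->
  exists k : {linear Y -> Z}, forall x, k (s x) = h x.
Proof.
move=> ss hk.
pose c y := projT1 (cid (ss y)).
have cP y : s (c y) = y by rewrite /c; case: cid.
have wd x x' : s x = s x' -> h x = h x'.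
  move=> e; apply/eqP; rewrite -subr_eq0 -linearB; apply/eqP/hk.
  by rewrite linearB e subrr.
have [k Hk] : exists k : {linear Y -> Z}, forall y, k y = h (c y).
  apply: mk_lin_ex => a x y.
  rewrite -linearP; apply: wd.
  by rewrite !linearP !cP.
by exists k => x; rewrite Hk; apply: wd; rewrite cP.
Qed.

Lemma proj_lift (P X Y : lmodType A) (g : {linear X -> Y}) (f : {linear P -> Y}) :
  projective P -> (forall p, exists x, g x = f p) ->
  exists h : {linear P -> X}, forall p, g (h p) = f p.
Proof.
move=> hP fim.
have [g' Hg'] := factor_inj (@smval_inj _ _ _ g) (h := g)
  (fun x => proj2 (smval_img g (g x)) (ex_intro _ x erefl)).
have [f' Hf'] := factor_inj (@smval_inj _ _ _ g) (h := f)
  (fun p => proj2 (smval_img g (f p)) (fim p)).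
have gs : forall w, exists x, g' x = w.
  move=> w; have [x Hx] := proj1 (smval_img g (smval w)) (ex_intro _ w erefl).
  by exists x; apply: smval_inj; rewrite Hg'.
have [h Hh] := hP _ _ g' f' gs.
by exists h => p; rewrite -Hg' Hh Hf'.
Qed.
End Basics.


Section Res.
Variables (A : pzRingType) (G : lmodType A).

Lemma res_dd (R : proj_res G) : is_proj_res R ->
  (forall n y, rd R n (rd R n.+1 y) = 0) /\ (forall y, raug R (rd R 0 y) = 0).
Proof.
case=> _ [_ [Ha Hd]]; split.
- by move=> n y; apply/Hd; exists y.
- by move=> y; apply/Ha; exists y.
Qed.

Definition CM (S T : proj_res G) (gam : forall k, {linear robj S k -> robj T k}) :=
 (forall x, raug T (gam 0%N x) = raug S x) /\
 (forall k x, rd T k (gam k.+1 x) = gam k (rd S k x)).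
Arguments CM S T gam : clear implicits.

Lemma chain_ex (S T : proj_res G) : is_proj_res S -> is_proj_res T ->
  exists gam, CM S T gam.
Proof.
move=> hS hT.
have [dS aS] := res_dd hS.
case: hS => pS _.
case: hT => _ [sT [aT dT]].
have [g0 Hg0] := proj_lift (g := raug T) (f := raug S) (pS 0%N) (fun p => sT _).
pose stepc k (g : {linear robj S k -> robj T k}) : {linear robj S k.+1 -> robj T k.+1} :=
  match pselect (exists g' : {linear robj S k.+1 -> robj T k.+1},
     forall x, rd T k (g' x) = g (rd S k x)) with
  | left e => projT1 (cid e) | right _ => \0 end.
have stepP k (g : {linear robj S k -> robj T k}) : (exists g' : {linear robj S k.+1 -> robj T k.+1},
     forall x, rd T k (g' x) = g (rd S k x)) ->
   forall x, rd T k (stepc k g x) = g (rd S k x).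
  by move=> e; rewrite /stepc; case: pselect => // e'; case: cid.
pose gam := fix gam k : {linear robj S k -> robj T k} :=
  match k with 0%N => g0 | k'.+1 => stepc k' (gam k') end.
exists gam; split; first exact: Hg0.
have exist k (g : {linear robj S k -> robj T k}) :
  (forall p, exists x, rd T k x = g (rd S k p)) ->
  exists g' : {linear robj S k.+1 -> robj T k.+1},
     forall x, rd T k (g' x) = g (rd S k x).
  move=> H.
  have [c Hc] := mk_lin_ex (f := fun x => g (rd S k x))
    (fun a x y => ltac:(by cbv beta; rewrite !linearP)).
  have [h Hh] := proj_lift (g := rd T k) (f := c) (pS k.+1)
    (fun p => ltac:(by cbv beta; rewrite Hc; apply: H)).
  by exists h => x; rewrite Hh Hc.
elim=> [|k IH].
  apply: stepP; apply: exist => p; apply/aT.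
  by rewrite /= Hg0 aS.
apply: stepP; apply: exist => p; apply/dT.
by rewrite IH dS linear0.
Qed.

Lemma homotopy_ex (R R' : proj_res G) alpha beta :
  is_proj_res R -> is_proj_res R' -> CM R' R alpha -> CM R R' beta ->
  forall k, exists h : {linear robj R k -> robj R k.+1},
    forall y, rd R k (y - alpha k.+1 (beta k.+1 y) - h (rd R k y)) = 0.
Proof.
move=> hR hR' [a0 aS] [b0 bS].
have [dR aR] := res_dd hR.
case: hR => pR [_ [eA eD]].
elim=> [|k [h Hh]].
  have [c Hc] := mk_lin_ex (f := fun x : robj R 0 => x - alpha 0%N (beta 0%N x))
    (fun a x y => ltac:(by cbv beta; rewrite (linearP (beta _)) (linearP (alpha _)) linB_aux)).
  have [h Hh] := proj_lift (g := rd R 0) (f := c) (pR 0%N)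
    (fun p => ltac:(by cbv beta; rewrite Hc; apply/eA; rewrite linearB a0 b0 subrr)).
  by exists h => y; rewrite !linearB Hh Hc aS bS subrr.
have [c Hc] := mk_lin_ex
    (f := fun y : robj R k.+1 => y - alpha k.+1 (beta k.+1 y) - h (rd R k y))
    (fun a x y => ltac:(by cbv beta; rewrite (linearP (rd R k)) (linearP h) (linearP (beta _)) (linearP (alpha _)) !linB_aux)).
have [h' Hh'] := proj_lift (g := rd R k.+1) (f := c) (pR k.+1)
    (fun p => ltac:(by cbv beta; rewrite Hc; apply/eD; apply: Hh)).
exists h' => z; rewrite !linearB Hh' Hc aS bS dR linear0 subr0.
by rewrite subrr.
Qed.

Definition good (R : proj_res G) (Q : lmodType A) (m : nat) :=
  forall theta : {linear robj R m.+1 -> Q}, (forall x, theta (rd R m.+1 x) = 0) ->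
  exists psi : {linear robj R m -> Q}, forall x, theta x = psi (rd R m x).

Lemma good_transfer (R R' : proj_res G) Q m :
  is_proj_res R -> is_proj_res R' -> good R' Q m -> good R Q m.
Proof.
move=> hR hR' gR' theta Ht.
have [alpha [a0 aS]] := chain_ex hR' hR.
have [beta [b0 bS]] := chain_ex hR hR'.
have [h Hh] := homotopy_ex hR hR' (conj a0 aS) (conj b0 bS) m.
have [t1 Ht1] := mk_lin_ex (f := fun x => theta (alpha m.+1 x))
   (fun a x y => ltac:(by cbv beta; rewrite !linearP)).
have [phi Hphi] := gR' t1 (fun x => ltac:(by cbv beta; rewrite Ht1 -aS Ht)).
have [psi Hpsi] := mk_lin_ex (f := fun x => phi (beta m x) + theta (h x))
   (fun a x y => ltac:(by cbv beta; rewrite !linearP scalerDr addrACA)).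
exists psi => y; rewrite Hpsi -bS -Hphi Ht1.
have [_ [_ [_ eD]]] := hR.
have [z Hz] := proj1 (eD _ _) (Hh y).
apply/eqP; rewrite -subr_eq0 opprD addrA -!linearB -Hz Ht //.
Qed.
End Res.


Section CR.
Variables (A : pzRingType) (C : complex A).
Definition trl i j (e : i = j) : {linear cobj C i -> cobj C j} :=
  match e in _ = j' return {linear cobj C i -> cobj C j'} with erefl => idfun end.
Definition cmp i j k (f : {linear cobj C j -> cobj C k}) (g : {linear cobj C i -> cobj C j}) :
  {linear cobj C i -> cobj C k} := f \o g.

Lemma trl_id i (e : i = i) x : trl e x = x.
Proof. by rewrite (eq_irrelevance e erefl). Qed.

Lemma trl_comp i j k (e1 : i = j) (e2 : j = k) (e3 : i = k) x :
  trl e2 (trl e1 x) = trl e3 x.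
Proof. by destruct e2; destruct e1; rewrite !trl_id. Qed.

Lemma cd_trl i j (e : i = j) (e' : i + 1 = j + 1) w :
  cd C j (trl e w) = trl e' (cd C i w).
Proof. by destruct e; rewrite !trl_id. Qed.

Lemma trl_eq0 i j (e : i = j) x : trl e x = 0 <-> x = 0.
Proof. by destruct e. Qed.

Lemma ek k : Negz k.+1 + 1 = Negz k.
Proof. rewrite !NegzE; lia. Qed.

Definition nd k : {linear cobj C (Negz k.+1) -> cobj C (Negz k)} :=
  cmp (trl (ek k)) (cd C (Negz k.+1)).

Lemma ndE k x : nd k x = trl (ek k) (cd C (Negz k.+1) x).
Proof. by []. Qed.

Definition negres (X : lmodType A) (aug : {linear cobj C (Negz 0) -> X}) : proj_res X :=
  @ProjRes A X (fun k => cobj C (Negz k)) nd aug.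

Lemma exact_fwd i J (e : i + 1 = J) (x : cobj C J) : acyclic C ->
  cd C J x = 0 -> exists w, trl e (cd C i w) = x.
Proof.
destruct e => -[_ ac] /ac [w Hw]; exists w; by rewrite trl_id.
Qed.

Lemma exact_bwd i J (e : i + 1 = J) w : acyclic C ->
  cd C J (trl e (cd C i w)) = 0.
Proof. by destruct e => -[cx _]; rewrite trl_id cx. Qed.

Lemma hom_gen (Q : lmodType A) i J K (e1 : i + 1 = J) (e2 : J + 1 = K) :
  Hom_acyclic C Q ->
  forall theta : {linear cobj C J -> Q}, (forall x, theta (trl e1 (cd C i x)) = 0) ->
  exists psi : {linear cobj C K -> Q}, forall x, theta x = psi (trl e2 (cd C J x)).
Proof.
destruct e1; destruct e2 => hom theta Ht.
have [psi Hpsi] := hom i theta (fun x => ltac:(by rewrite -(Ht x) trl_id)).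
by exists psi => x; rewrite trl_id Hpsi.
Qed.

Lemma negres_ok (X : lmodType A) (j : {linear X -> cobj C 0})
  (aug : {linear cobj C (Negz 0) -> X}) :
  totally_acyclic C -> injective j -> (forall x, cd C 0 x = 0 <-> exists g, j g = x) ->
  (forall x, j (aug x) = cd C (Negz 0) x) ->
  is_proj_res (negres aug) /\
  forall Q, projective Q -> forall m, good (negres aug) Q m.
Proof.
move=> [pC [acC homC]] ji jk ja.
split; last first.
  move=> Q hQ m theta Ht.
  have [psi Hpsi] := hom_gen (e1 := ek m.+1) (ek m) (homC Q hQ) Ht.
  by exists psi.
have j0 : j 0 = 0 by rewrite linear0.
split; first by move=> n; apply: pC.
split.
  move=> g.
  have [w Hw] := @exact_fwd (Negz 0) 0 erefl (j g) acC (proj2 (jk _) (ex_intro _ g erefl)).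
  by exists w; apply: ji; rewrite ja -Hw trl_id.
split.
  move=> x; split.
    move=> ax.
    have cx : cd C (Negz 0) x = 0 by rewrite -ja ax.
    have [w Hw] := exact_fwd (ek 0) acC cx.
    by exists w.
  case=> y <-; apply: ji; rewrite ja /= exact_bwd // linear0.
move=> n x; split.
  rewrite /= trl_eq0 => cx.
  have [w Hw] := exact_fwd (ek n.+1) acC cx.
  by exists w.
by case=> y <-; rewrite /= exact_bwd // linear0.
Qed.

Lemma aug_ex (X : lmodType A) (j : {linear X -> cobj C 0}) :
  totally_acyclic C -> injective j -> (forall x, cd C 0 x = 0 <-> exists g, j g = x) ->
  exists aug : {linear cobj C (Negz 0) -> X}, forall x, j (aug x) = cd C (Negz 0) x.
Proof.
move=> [_ [[cx _] _]] ji jk.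
apply: factor_inj => // z; apply/jk; exact: (cx (Negz 0) z).
Qed.

End CR.


Section Main.
Variable A : pzRingType.

Definition shiftC (C : complex A) : complex A :=
  @Complex A (fun k => cobj C (k + 1)) (fun k => cd C (k + 1)).

Lemma trl_shift (C : complex A) i j (e : i = j) (e' : i + 1 = j + 1) x :
  trl (shiftC C) e x = trl C e' x.
Proof. by destruct e; rewrite !trl_id. Qed.

Lemma shift_ta (C : complex A) : totally_acyclic C -> totally_acyclic (shiftC C).
Proof.
move=> [pC [[cx ac] hom]]; split; first by move=> k; apply: pC.
split; first by split; [move=> k x; apply: cx | move=> k y; apply: ac].
by move=> Q hQ k; apply: hom.
Qed.

Lemma gp_good (G : lmodType A) : gorenstein_projective G ->
  forall Q, projective Q -> forall R : proj_res G, is_proj_res R -> forall m, good R Q m.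
Proof.
move=> [C [tA [i [ii ik]]]] Q hQ R hR m.
have [aug Ha] := aug_ex tA ii ik.
have [hN gN] := negres_ok tA ii ik Ha.
exact: good_transfer hR hN (gN Q hQ m).
Qed.

Lemma extend (M : lmodType A)
  (H : forall (n : nat) (G : lmodType A), (1 <= n)%N -> gorenstein_projective G ->
     Ext_eq0 n G M)
  (C : complex A) (tA : totally_acyclic C) (G : lmodType A) (i : {linear G -> cobj C 0})
  (ii : injective i) (ik : forall x, cd C 0 x = 0 <-> exists g, i g = x) :
  forall f : {linear G -> M}, exists psi : {linear cobj C 0 -> M}, forall g, psi (i g) = f g.
Proof.
move=> f.
have tA2 := shift_ta tA.
pose C2 := shiftC C.
have [j1 Hj1] := mk_lin_ex (f := @smval _ _ _ (cd C 0))
   (fun a x y => smval_lin a x y).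
have ji1 : injective j1.
  by move=> x y; rewrite !Hj1; apply: smval_inj.
have ik1 : forall x : cobj C2 0, cd C2 0 x = 0 <-> exists g, j1 g = x.
  move=> x; case: tA => _ [[cx ac] _]; split.
    move=> /(ac 0) [y Hy].
    have [w Hw] := proj2 (smval_img (cd C 0) x) (ex_intro _ y Hy).
    by exists w; rewrite Hj1.
  case=> g <-; rewrite Hj1.
  have [y Hy] := proj1 (smval_img (cd C 0) (smval g)) (ex_intro _ g erefl).
  by rewrite /= -Hy; apply: cx.
have gp1 : gorenstein_projective (subm (cd C 0)).
  by exists C2; split => //; exists j1; split.
have [aug1 Ha1] := aug_ex tA2 ji1 ik1.
have [hN1 _] := negres_ok tA2 ji1 ik1 Ha1.
have E := H 1%N _ isT gp1 _ hN1.
have [aug Ha] := aug_ex tA ii ik.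
have [hN _] := negres_ok tA ii ik Ha.
have [_ [surj _]] := hN.
have [phi Hphi] := mk_lin_ex
  (f := fun x : cobj C (Negz 1 + 1) => f (aug (trl C (ek 0) x)))
  (fun a x y => ltac:(by cbv beta; rewrite !linearP)).
have Hc : forall x, phi (rd (negres aug1) 1 x) = 0.
  move=> x; rewrite Hphi.
  suff -> : aug (trl C (ek 0) (rd (negres aug1) 1 x)) = 0 by rewrite linear0.
  apply: ii; rewrite Ha linear0 /=.
  rewrite (trl_shift _ (congr1 (fun t => t + 1) (ek 1))).
  rewrite (trl_comp _ _ (etrans (congr1 (fun t => t + 1) (ek 1)) (ek 0))).
  by apply: (@exact_bwd _ C (Negz 2 + 1) (Negz 0)); case: tA => _ [].
have [psi Hpsi] := E phi Hc.
exists psi => g.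
have [x <-] := surj g.
rewrite Ha.
have := Hpsi (trl C (esym (ek 0)) x).
rewrite Hphi (trl_comp _ _ (erefl)) trl_id /= => ->.
rewrite (cd_trl _ (congr1 (fun t => t + 1) (esym (ek 0)))).
rewrite (trl_shift _ (congr1 (fun t => t + 1) (ek 0))).
by rewrite (trl_comp _ _ (erefl)) trl_id.
Qed.
End Main.

Unset Implicit Arguments.
Set Strict Implicit.
Theorem corollary3p1p15 (R : comNzRingType) (A : algType R)
  (hA : artin_algebra A)
  (M OmegaM P : lmodType A) (hP : projective P)
  (p : {linear P -> M}) (p_surj : forall m, exists x, p x = m)
  (i : {linear OmegaM -> P}) (i_inj : injective i)
  (i_ker : forall x, p x = 0 <-> exists k, i k = x) :
  (forall (n : nat) (G : lmodType A), (1 <= n)%N -> gorenstein_projective G ->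
     Ext_eq0 n G M) <->
  (forall (n : nat) (G : lmodType A), (1 <= n)%N -> gorenstein_projective G ->
     Ext_eq0 n G OmegaM).
Proof.
have extP G (gG : gorenstein_projective G) := gp_good gG hP.
have pi0 k : p (i k) = 0 by apply/i_ker; exists k.
have i0 : i 0 = 0 by rewrite GRing.linear0.
split.
- move=> H [|m] G n1 gG //= Rs hR chi Hc; clear n1.
  have [dd aa] := res_dd hR.
  have [ic Hic] := mk_lin_ex (f := fun x => i (chi x))
    (fun a x y => ltac:(by cbv beta; rewrite !GRing.linearP)).
  have [psi Hpsi] := extP G gG Rs hR m ic
     (fun x => ltac:(by rewrite Hic Hc)).
  have [pt [Hpt1 Hpt2]] : exists pt : {linear robj Rs m -> P},
      (forall y, p (pt y) = p (psi y)) /\ (forall x, pt (rd Rs m x) = 0).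
    have [pp Hpp] := mk_lin_ex (f := fun x => p (psi x))
      (fun a x y => ltac:(by cbv beta; rewrite !GRing.linearP)).
    case: m chi Hc ic Hic psi Hpsi pp Hpp => [|m] chi Hc ic Hic psi Hpsi pp Hpp.
      have [_ [sR [aR _]]] := hR.
      have [phi Hphi] := factor_surj (s := raug Rs) (h := pp) sR
        (fun y Hy => ltac:(by case: (proj1 (aR y) Hy) => x <-;
            rewrite Hpp -Hpsi Hic pi0)).
      have gG' := gG.
      case: gG' => C [tA [iG [iGi iGk]]].
      have [psh Hpsh] := extend H tA iGi iGk phi.
      have [pC _] := tA.
      have [pst Hpst] := proj_lift (g := p) (f := psh) (pC 0) (fun x => p_surj _).
      have [pt Hpt] := mk_lin_ex (f := fun y => pst (iG (raug Rs y)))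
        (fun a x y => ltac:(by cbv beta; rewrite !GRing.linearP)).
      exists pt; split.
        by move=> y; rewrite Hpt Hpst Hpsh Hphi Hpp.
      by move=> x; rewrite Hpt aa !GRing.linear0.
    have [phi Hphi] := H m.+1 G isT gG Rs hR pp
      (fun x => ltac:(by rewrite Hpp -Hpsi Hic pi0)).
    have [pR _] := hR.
    have [ph' Hph'] := proj_lift (g := p) (f := phi) (pR m) (fun x => p_surj _).
    have [pt Hpt] := mk_lin_ex (f := fun y => ph' (rd Rs m y))
        (fun a x y => ltac:(by cbv beta; rewrite !GRing.linearP)).
    exists pt; split.
      by move=> y; rewrite Hpt Hph' -Hphi Hpp.
    by move=> x; rewrite Hpt dd GRing.linear0.
  have [df Hdf] := mk_lin_ex (f := fun y => psi y - pt y)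
    (fun a x y => ltac:(by cbv beta; rewrite (GRing.linearP psi) (GRing.linearP pt) linB_aux)).
  have [xi Hxi] := factor_inj (h := df) i_inj
    (fun y => ltac:(by apply/i_ker; rewrite Hdf GRing.linearB Hpt1 GRing.subrr)).
  exists xi => x; apply: i_inj.
  by rewrite Hxi Hdf Hpt2 GRing.subr0 -Hpsi Hic.
- move=> H [|m] G n1 gG //= Rs hR phi Hphi.
  have [dd aa] := res_dd hR.
  have [pR _] := hR.
  have [ph' Hph'] := proj_lift (g := p) (f := phi) (pR m.+1) (fun x => p_surj _).
  have [h1 Hh1] := mk_lin_ex (f := fun x => ph' (rd Rs m.+1 x))
        (fun a x y => ltac:(by cbv beta; rewrite !GRing.linearP)).
  have [chi Hchi] := factor_inj (h := h1) i_inj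
    (fun y => ltac:(by apply/i_ker; rewrite Hh1 Hph' Hphi)).
  have Hc : forall x, chi (rd Rs m.+2 x) = 0.
    by move=> x; apply: i_inj; rewrite Hchi Hh1 dd GRing.linear0 i0.
  have [xi Hxi] := H m.+2 G isT gG Rs hR chi Hc.
  have [th Hth] := mk_lin_ex (f := fun y => ph' y - i (xi y))
    (fun a x y => ltac:(by cbv beta; rewrite (GRing.linearP ph') (GRing.linearP xi) (GRing.linearP i) linB_aux)).
  have [psi Hpsi] := extP G gG Rs hR m th
    (fun x => ltac:(by rewrite Hth -Hxi Hchi Hh1 GRing.subrr)).
  have [pp Hpp] := mk_lin_ex (f := fun x => p (psi x))
      (fun a x y => ltac:(by cbv beta; rewrite !GRing.linearP)).
  exists pp => x.
  rewrite Hpp -Hpsi Hth GRing.linearB pi0 GRing.subr0 Hph' //.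
Qed.
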